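(* Let $X$ be a finite connected simplicial complex and $\delta$ a cellular perversity. The category $\operatorname{Pre}\Lambda(X,\delta)$ of presheaves on the poset $\Lambda(X,\delta)$ is isomorphic to the category $\mathcal R(X,\delta)$.
   Context: Simplices are open; $\Delta\leftrightarrow\Delta'$ means one is a face of the other. A cellular perversity is $\delta:\mathbb Z_{\ge0}\to\mathbb Z$, $\delta(0)=0$, mapping each $\{0,\dots,k\}$ bijectively onto an interval $\{a,\dots,a+k\}$, $a\le0$; $\delta(\Delta):=\delta(\dim\Delta)$. $\Lambda(X,\delta)$: simplices ordered by $\Delta\ge\Delta'$ iff there is a chain $\Delta=\Delta_0,\dots,\Delta_r=\Delta'$ ($r\ge0$) with $\Delta_i\leftrightarrow\Delta_{i+1}$, $\delta(\Delta_i)=\delta(\Delta_{i+1})+1$. A presheaf on a poset $\Lambda$ assigns a vector space $S(\alpha)$ to each $\alpha$ and linear maps $s(\alpha,\beta):S(\alpha)\to S(\beta)$ for $\alpha\ge\beta$, with $s(\alpha,\alpha)=\mathrm{Id}$ and $s(\beta,\gamma)s(\alpha,\beta)=s(\alpha,\gamma)$; morphisms are families of linear maps commuting with the $s$. $\mathcal R(X,\delta)$: objects assign a finite-dimensional $\mathbb F$-vector space $S(\Delta)$ to each simplex and a linear map $s(\Delta,\Delta'):S(\Delta)\to S(\Delta')$ to each pair with $\Delta\leftrightarrow\Delta'$, $\delta(\Delta)=\delta(\Delta')+1$, such that $s(\Delta_1,\Delta'')s(\Delta',\Delta_1)=s(\Delta_2,\Delta'')s(\Delta',\Delta_2)$ whenever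 $\delta(\Delta')=k+1$, $\delta(\Delta_1)=\delta(\Delta_2)=k$, $\delta(\Delta'')=k-1$ and $\Delta'\leftrightarrow\Delta_j\leftrightarrow\Delta''$; morphisms are families of linear maps commuting with the $s$. *)

(* Defs.v *)
From HB Require Import structures.
From mathcomp Require Import all_boot all_order all_algebra.
Set Implicit Arguments. Unset Strict Implicit. Unset Printing Implicit Defensive.
Import GRing.Theory Num.Theory.
Local Open Scope ring_scope.

Definition simplicial_complex (V : finType) (X : {set {set V}}) : Prop :=
  set0 \notin X /\
  (forall A B : {set V}, A \in X -> B \subset A -> B != set0 -> B \in X).

Definition simplex (V : finType) (X : {set {set V}}) := {A : {set V} | A \in X}.

Definition sdim (V : finType) (X : {set {set V}}) (a : simplex X) : nat :=
  (#|val a|).-1.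

Definition incident (V : finType) (X : {set {set V}}) : rel (simplex X) :=
  fun a b => (val a \subset val b) || (val b \subset val a).

Definition sc_connected (V : finType) (X : {set {set V}}) : Prop :=
  forall a b : simplex X, connect (@incident V X) a b.

Definition cellular_perversity (d : nat -> int) : Prop :=
  d 0%N = 0 /\
  forall k : nat, exists a : int, a <= 0 /\
    (forall i j : nat, (i <= k)%N -> (j <= k)%N -> d i = d j -> i = j) /\
    (forall i : nat, (i <= k)%N -> a <= d i <= a + k%:Z) /\
    (forall z : int, a <= z <= a + k%:Z -> exists2 i : nat, (i <= k)%N & d i = z).

Section Cats.
Variables (F : fieldType) (V : finType) (X : {set {set V}}) (d : nat -> int).

Local Notation simp := (simplex X).

Definition pdim (a : simp) : int := d (sdim a).

Definition lcover : rel simp :=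
  fun a b => incident a b && (pdim a == pdim b + 1).

(* Delta >= Delta' in Lambda(X, delta) *)
Definition lam_ge : rel simp := connect lcover.

Record presheaf := Presheaf {
  ps_sp : simp -> vectType F;
  ps_map : forall a b : simp, lam_ge a b -> 'Hom(ps_sp a, ps_sp b);
  ps_id : forall a (h : lam_ge a a), ps_map h = \1%VF;
  ps_comp : forall a b c (hab : lam_ge a b) (hbc : lam_ge b c) (hac : lam_ge a c),
      (ps_map hbc \o ps_map hab)%VF = ps_map hac
}.

Record presheaf_hom (S T : presheaf) := PresheafHom {
  ph_fun : forall a : simp, 'Hom(ps_sp S a, ps_sp T a);
  ph_nat : forall a b (h : lam_ge a b),
      (ph_fun b \o ps_map S h)%VF = (ps_map T h \o ph_fun a)%VF
}.

Definition ph_id (S : presheaf) : presheaf_hom S S.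
Proof.
exists (fun a => \1%VF) => a b h; by rewrite comp_lfun1l comp_lfun1r.
Defined.

Definition ph_comp (S T U : presheaf) (g : presheaf_hom T U) (f : presheaf_hom S T) :
  presheaf_hom S U.
Proof.
exists (fun a => (ph_fun g a \o ph_fun f a)%VF) => a b h.
by rewrite -comp_lfunA ph_nat comp_lfunA ph_nat -comp_lfunA.
Defined.

Record robj := RObj {
  r_sp : simp -> vectType F;
  r_map : forall a b : simp, lcover a b -> 'Hom(r_sp a, r_sp b);
  r_comm : forall a' a1 a2 a'' (h1 : lcover a' a1) (h1' : lcover a1 a'')
                  (h2 : lcover a' a2) (h2' : lcover a2 a''),
      (r_map h1' \o r_map h1)%VF = (r_map h2' \o r_map h2)%VF
}.

Record robj_hom (S T : robj) := RHom {
  rh_fun : forall a : simp, 'Hom(r_sp S a, r_sp T a);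
  rh_nat : forall a b (h : lcover a b),
      (rh_fun b \o r_map S h)%VF = (r_map T h \o rh_fun a)%VF
}.

Definition rh_id (S : robj) : robj_hom S S.
Proof.
exists (fun a => \1%VF) => a b h; by rewrite comp_lfun1l comp_lfun1r.
Defined.

Definition rh_comp (S T U : robj) (g : robj_hom T U) (f : robj_hom S T) :
  robj_hom S U.
Proof.
exists (fun a => (rh_fun g a \o rh_fun f a)%VF) => a b h.
by rewrite -comp_lfunA rh_nat comp_lfunA rh_nat -comp_lfunA.
Defined.

Definition Pre_R_isomorphic : Prop :=
  exists (Fo : presheaf -> robj)
         (Fm : forall S T : presheaf, presheaf_hom S T -> robj_hom (Fo S) (Fo T)),
    [/\ (forall S, Fm S S (ph_id S) = rh_id (Fo S)),
        (forall S T U (f : presheaf_hom S T) (g : presheaf_hom T U),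
            Fm S U (ph_comp g f) = rh_comp (Fm T U g) (Fm S T f)),
        bijective Fo &
        (forall S T, bijective (Fm S T))].

End Cats.

(* Main.v *)
Require Import Defs.
From mathcomp Require Import all_boot all_order all_algebra.
From mathcomp Require Import zify.
From Stdlib Require Import ProofIrrelevance FunctionalExtensionality.
Set Implicit Arguments. Unset Strict Implicit. Unset Printing Implicit Defensive.
Import Order.TTheory GRing.Theory Num.Theory.
Local Open Scope ring_scope.

Section Comb.
Variables (V : finType) (X : {set {set V}}) (d : nat -> int).
Hypothesis hX : simplicial_complex X.
Hypothesis hd : cellular_perversity d.

Local Notation simp := (simplex X).

Lemma d0 : d 0%N = 0. Proof. by case: hd. Qed.

Lemma d_inj i j : d i = d j -> i = j.
Proof.
case: hd => _ /(_ (maxn i j)) [a [_ [inj _]]].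
by apply: inj; rewrite ?leq_maxl ?leq_maxr.
Qed.

Lemma d_ivt i j z : d i <= z <= d j -> exists m, (m <= maxn i j)%N /\ d m = z.
Proof.
case: hd => _ /(_ (maxn i j)) [a [_ [_ [rng sur]]]] /andP[h1 h2].
have /andP[ai _] := rng i (leq_maxl _ _).
have /andP[_ ja] := rng j (leq_maxr _ _).
have [m hm e] : exists2 m, (m <= maxn i j)%N & d m = z.
  apply: sur; apply/andP; split; lia.
by exists m.
Qed.

Lemma d_mono_pos i j : 0 <= d i -> d i <= d j -> (i <= j)%N.
Proof.
move=> h1 h2.
have [m [hm e]] : exists m, (m <= maxn 0 j)%N /\ d m = d i.
  by apply: d_ivt; rewrite d0 h1 h2.
by move: hm; rewrite (d_inj e) max0n.
Qed.

Lemma d_mono_neg i j : d j <= d i -> d i <= 0 -> (i <= j)%N.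
Proof.
move=> h1 h2.
have [m [hm e]] : exists m, (m <= maxn j 0)%N /\ d m = d i.
  by apply: d_ivt; rewrite d0 h1 h2.
by move: hm; rewrite (d_inj e) maxn0.
Qed.

Lemma card_gt0S (a : simp) : (0 < #|val a|)%N.
Proof.
rewrite card_gt0; apply/negP => /eqP e.
by case: hX => h _; move: (valP a); rewrite e (negbTE h).
Qed.

Lemma sdimE (a : simp) : (sdim a).+1 = #|val a|.
Proof. by rewrite /sdim prednK // card_gt0S. Qed.

Lemma sub_in (A : {set V}) (a : simp) : A \subset val a -> (0 < #|A|)%N -> A \in X.
Proof. by move=> s c; case: hX => _ h; apply: (h _ _ (valP a) s); rewrite -card_gt0. Qed.

Lemma pdim_insubd (x : simp) A : A \in X -> pdim d (insubd x A) = d (#|A|.-1).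
Proof. by move=> h; rewrite /pdim /sdim insubdK. Qed.

Lemma pdimE (a : simp) : pdim d a = d (#|val a|.-1).
Proof. by []. Qed.

Lemma cover_pdim (a b : simp) : lcover d a b -> pdim d a = pdim d b + 1.
Proof. by case/andP => _ /eqP. Qed.

Lemma cover_down (a b : simp) : lcover d a b -> 0 <= pdim d b -> val b \subset val a.
Proof.
case/andP => /orP[] // sab /eqP e hb.
have h1 : (sdim a <= sdim b)%N.
  by rewrite -ltnS !sdimE subset_leq_card.
have h2 : (sdim b <= sdim a)%N by apply: d_mono_pos => //; rewrite /pdim in e hb *; lia.
have : sdim a = sdim b by apply/eqP; rewrite eqn_leq h1 h2.
by move: e; rewrite /pdim => e1 e2; rewrite e2 in e1; lia.
Qed.

Lemma cover_up (a b : simp) : lcover d a b -> pdim d a <= 0 -> val a \subset val b.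
Proof.
case/andP => /orP[] // sab /eqP e hb.
have h1 : (sdim b <= sdim a)%N.
  by rewrite -ltnS !sdimE subset_leq_card.
have h2 : (sdim a <= sdim b)%N by apply: d_mono_neg => //; rewrite /pdim in e hb *; lia.
have : sdim a = sdim b by apply/eqP; rewrite eqn_leq h1 h2.
by move: e; rewrite /pdim => e1 e2; rewrite e2 in e1; lia.
Qed.

Lemma ge_fwd (u b : simp) : lam_ge d u b ->
  [/\ pdim d b <= pdim d u, (0 <= pdim d b -> val b \subset val u),
      (pdim d u <= 0 -> val u \subset val b) &
      (pdim d b <= 0 <= pdim d u -> exists p, (p \in val u) && (p \in val b))].
Proof.
move/connectP => [s]; elim: s u => [|c s IH] u /=.
  move=> _ ->; split => //.
  by move=> _; have /card_gt0P [p hp] := card_gt0S u; exists p; apply/andP; split.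
case/andP => hc hp hl; have [i1 i2 i3 i4] := IH c hp hl.
have e := cover_pdim hc.
have F2 : pdim d u <= 0 -> val u \subset val b.
  move=> h; apply: subset_trans (cover_up hc h) (i3 _); lia.
split.
- lia.
- move=> h; apply: subset_trans (i2 h) (cover_down hc _); lia.
- exact: F2.
- move=> /andP[h1 h2]; case: (lerP 0 (pdim d c)) => h3.
    have [p /andP[p1 p2]] := i4 (introT andP (conj h1 h3)).
    by exists p; rewrite p2 (subsetP (cover_down hc h3)).
  have /card_gt0P [p hq] := card_gt0S u; exists p.
  by rewrite hq (subsetP (F2 _)) //; lia.
Qed.


Lemma SUB (A B : {set V}) k : A \subset B -> (#|A| <= k <= #|B|)%N ->
  exists C : {set V}, [/\ A \subset C, C \subset B & #|C| = k].
Proof.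
move=> sAB /andP[hA hB].
move: {2}(#|B| - k)%N (erefl (#|B| - k)%N) => n.
elim: n B sAB hB => [|n IH] B sAB hB hn.
  by exists B; split => //; apply/eqP; rewrite eqn_leq hB; lia.
have : (0 < #|B :\: A|)%N.
  by rewrite cardsD (setIidPr sAB); lia.
case/card_gt0P => x; rewrite inE => /andP[xA xB].
have [|||C [h1 h2 h3]] := IH (B :\ x).
- by rewrite subsetD1 sAB.
- by move: hn; rewrite (cardsD1 x B) xB; lia.
- by move: hn; rewrite (cardsD1 x B) xB; lia.
by exists C; split => //; apply: subset_trans h2 (subD1set _ _).
Qed.

Lemma exists_nat (z : int) : 0 <= z -> exists n : nat, z = n%:Z.
Proof. by case: z => // n _; exists n. Qed.

Lemma reach_down (u b : simp) : 0 <= pdim d b -> pdim d b <= pdim d u ->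
  val b \subset val u -> lam_ge d u b.
Proof.
move=> h0 hle; have [n hn] : exists n : nat, pdim d u - pdim d b = n%:Z by apply: exists_nat; lia.
elim: n u hn hle => [|n IH] u hn hle sbu.
  have e : sdim u = sdim b by apply: d_inj; rewrite /pdim in hn *; lia.
  have -> : u = b; last exact: connect0.
  by apply/val_inj/eqP; rewrite eq_sym eqEcard sbu -!sdimE e /=.
have [m [_ hm]] : exists m, (m <= maxn (sdim b) (sdim u))%N /\ d m = pdim d u - 1.
  apply: d_ivt; change ((pdim d b <= pdim d u - 1) && (pdim d u - 1 <= pdim d u)); apply/andP; split; lia.
have m1 : (sdim b <= m)%N by apply: d_mono_pos; rewrite ?hm; change (0 <= pdim d b) || change (pdim d b <= pdim d u - 1); lia.
have m2 : (m <= sdim u)%N by apply: d_mono_pos; rewrite ?hm; change (pdim d u - 1 <= pdim d u) || idtac; lia.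
have m3 : m != sdim u by apply/eqP => e; move: hm; rewrite e; change (pdim d u = pdim d u - 1 -> False); lia.
have [C [h1 h2 h3]] : exists C : {set V}, [/\ val b \subset C, C \subset val u & #|C| = m.+1].
  by apply: SUB => //; rewrite -!sdimE; apply/andP; split; lia.
have hC : C \in X by apply: sub_in h2 _; rewrite h3.
have hc : lcover d u (insubd u C).
  apply/andP; split; first by rewrite /incident insubdK // h2 orbT.
  by rewrite pdim_insubd // h3 /= hm; apply/eqP; lia.
apply: connect_trans (connect1 hc) _.
apply: IH; rewrite ?insubdK // pdim_insubd // h3 /= hm; lia.
Qed.

Lemma reach_up (u b : simp) : pdim d u <= 0 -> pdim d b <= pdim d u ->
  val u \subset val b -> lam_ge d u b.
Proof.
move=> h0 hle; have [n hn] : exists n : nat, pdim d u - pdim d b = n%:Z by apply: exists_nat; lia.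
elim: n u hn h0 hle => [|n IH] u hn h0 hle sbu.
  have e : sdim u = sdim b by apply: d_inj; rewrite /pdim in hn *; lia.
  have -> : u = b; last exact: connect0.
  by apply/val_inj/eqP; rewrite eqEcard sbu -!sdimE e /=.
have [m [_ hm]] : exists m, (m <= maxn (sdim b) (sdim u))%N /\ d m = pdim d u - 1.
  apply: d_ivt; change ((pdim d b <= pdim d u - 1) && (pdim d u - 1 <= pdim d u)); apply/andP; split; lia.
have m1 : (m <= sdim b)%N by apply: d_mono_neg; rewrite ?hm; change (pdim d b <= pdim d u - 1) || idtac; lia.
have m2 : (sdim u <= m)%N by apply: d_mono_neg; rewrite ?hm; change (pdim d u - 1 <= pdim d u) || change (pdim d u <= 0); lia.
have m3 : m != sdim u by apply/eqP => e; move: hm; rewrite e; change (pdim d u = pdim d u - 1 -> False); lia.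
have [C [h1 h2 h3]] : exists C : {set V}, [/\ val u \subset C, C \subset val b & #|C| = m.+1].
  by apply: SUB => //; rewrite -!sdimE; apply/andP; split; lia.
have hC : C \in X by apply: sub_in h2 _; rewrite h3.
have hc : lcover d u (insubd u C).
  apply/andP; split; first by rewrite /incident insubdK // h1.
  by rewrite pdim_insubd // h3 /= hm; apply/eqP; lia.
apply: connect_trans (connect1 hc) _.
apply: IH; rewrite ?insubdK // pdim_insubd // h3 /= hm; lia.
Qed.

Lemma reach_cross (u b : simp) p : pdim d b <= 0 -> 0 <= pdim d u ->
  p \in val u -> p \in val b -> lam_ge d u b.
Proof.
move=> hb hu pu pb.
have hP : [set p] \in X by apply: (@sub_in _ u); rewrite ?sub1set ?cards1.
have e : pdim d (insubd u [set p]) = 0 by rewrite pdim_insubd // cards1 d0.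
have h1 : lam_ge d u (insubd u [set p]).
  by apply: reach_down; rewrite ?e ?insubdK ?sub1set.
have h2 : lam_ge d (insubd u [set p]) b.
  by apply: reach_up; rewrite ?e ?insubdK ?sub1set.
exact: connect_trans h1 h2.
Qed.


Lemma johnson (T : Type) (g : {set V} -> T) (L U : {set V}) k :
  (forall w w' : {set V}, L \subset w -> w \subset U -> L \subset w' -> w' \subset U ->
     #|w| = k -> #|w'| = k -> (k <= (#|w :&: w'|).+1)%N -> g w = g w') ->
  forall x y : {set V}, L \subset x -> x \subset U -> L \subset y -> y \subset U ->
     #|x| = k -> #|y| = k -> g x = g y.
Proof.
move=> H x y Lx xU Ly yU cx cy.
move: {2}#|x :\: y| (erefl #|x :\: y|) => n.
elim: n x Lx xU cx => [|n IH] x Lx xU cx hn.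
  have sxy : x \subset y by rewrite -setD_eq0 -cards_eq0 hn.
  suff -> : x = y by [].
  by apply/eqP; rewrite eqEcard sxy cx cy leqnn.
have /card_gt0P [u] : (0 < #|x :\: y|)%N by rewrite hn.
rewrite inE => /andP[uy ux].
have : (0 < #|y :\: x|)%N.
  by move: hn; rewrite !cardsD setIC cx cy => ->.
case/card_gt0P => v; rewrite inE => /andP[vx vy].
have uL : u \notin L by apply: contra uy => /(subsetP Ly).
have vxu : v \notin x :\ u by rewrite inE (negbTE vx) andbF.
have cxu : #|x :\ u| = k.-1 by rewrite -cx (cardsD1 u x) ux.
have k0 : (0 < k)%N by rewrite -cx; apply/card_gt0P; exists u.
pose w := v |: (x :\ u).
have Lw : L \subset w by apply: subset_trans (subsetU1 _ _); rewrite subsetD1 Lx uL.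
have wU : w \subset U.
  by rewrite subUset sub1set (subsetP yU) //= (subset_trans (subD1set _ _) xU).
have cw : #|w| = k by rewrite cardsU1 vxu cxu add1n prednK.
transitivity (g w).
  apply: H => //.
  have : x :\ u \subset x :&: w by rewrite subsetI subD1set subsetU1.
  by move/subset_leq_card; rewrite cxu => hh; clear -hh k0; lia.
apply: IH => //.
have e : w :\: y = (x :\: y) :\ u.
  apply/setP => t; rewrite !inE.
  have [->|tv] := eqVneq t v; first by rewrite vy /= !andbF.
  by rewrite /=; case: (t \in y); case: (t \in x); case: (t != u).
by move: hn; rewrite e (cardsD1 u (x :\: y)) inE uy ux add1n => -[].
Qed.


Ltac ilia := repeat match goal with
  | H : context [card _] |- _ => clear H
  | H : context [predn _] |- _ => clear H
  | H : context [maxn _ _] |- _ => clear H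
  | H : is_true (_ \subset _) |- _ => clear H
  | H : forall _, _ |- _ => clear H
  | H : is_true (_ \in _) |- _ => clear H
  | H : is_true (lcover _ _ _) |- _ => clear H
  | H : is_true (lam_ge _ _ _) |- _ => clear H
  end; lia.

Lemma covE (s t : simp) : lcover d s t =
  ((val s \subset val t) || (val t \subset val s)) && (pdim d s == pdim d t + 1).
Proof. by rewrite /lcover /incident. Qed.

Lemma conn (T : Type) (f : simp -> T) (a b : simp) :
  pdim d b + 2 <= pdim d a ->
  (forall x y z, lcover d a x -> lcover d a y -> lcover d x z -> lcover d y z ->
     lam_ge d z b -> f x = f y) ->
  forall x y, lcover d a x -> lcover d a y -> lam_ge d x b -> lam_ge d y b -> f x = f y.
Proof.
move=> hab Hf x y ax ay xb yb.
have ex := cover_pdim ax; have ey := cover_pdim ay.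
have kxy : #|val y| = #|val x|.
  have e : sdim y = sdim x.
    apply: d_inj; change (pdim d y = pdim d x).
    by rewrite ex in ey; apply: (addIr 1).
  by rewrite -!sdimE e.
have hk : #|val x| = (sdim x).+1 by rewrite sdimE.
have [m2 [_ hm2]] : exists m, (m <= maxn (sdim b) (sdim a))%N /\ d m = pdim d a - 2.
  apply: d_ivt; change ((pdim d b <= pdim d a - 2) && (pdim d a - 2 <= pdim d a)).
  apply/andP; split; ilia.
have [g gdef] : exists g : {set V} -> T, forall A, g A = f (insubd x A).
  by exists (fun A => f (insubd x A)).
have gE : forall s : simp, g (val s) = f s by move=> s; rewrite gdef valKd.
have [xb1 xb2 xb3 xb4] := ge_fwd xb; have [yb1 yb2 yb3 yb4] := ge_fwd yb.
have pdx : d (#|val x|).-1 = pdim d a - 1 by change (pdim d x = pdim d a - 1); ilia.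
have k0 : (0 < #|val x|)%N := card_gt0S x.
case: (lerP 0 (pdim d a - 2)) => hva.
- have xa : val x \subset val a by apply: cover_down ax _; ilia.
  have ya : val y \subset val a by apply: cover_down ay _; ilia.
  have m2x : (m2 <= sdim x)%N.
    by apply: d_mono_pos; rewrite hm2; [ilia | change (pdim d a - 2 <= pdim d x); ilia].
  have m2x' : m2 != sdim x.
    by apply/eqP => e; move: hm2; rewrite e; change (pdim d x = pdim d a - 2 -> False); ilia.
  have HI : forall L : {set V}, (#|L| <= m2.+1)%N ->
      (forall Z : {set V}, Z \in X -> L \subset Z -> #|Z| = m2.+1 -> lam_ge d (insubd x Z) b) ->
      forall w w' : {set V}, L \subset w -> w \subset val a -> L \subset w' -> w' \subset val a ->
      #|w| = #|val x| -> #|w'| = #|val x| -> (#|val x| <= (#|w :&: w'|).+1)%N -> g w = g w'.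
    move=> L cL HZ w w' Lw wa Lw' w'a cw cw' cww.
    have [Z [h1 h2 h3]] : exists Z : {set V}, [/\ L \subset Z, Z \subset w :&: w' & #|Z| = m2.+1].
      by apply: SUB; rewrite ?subsetI ?Lw ?Lw' //; apply/andP; split; clear -cL cww m2x m2x' hk cw; lia.
    have hw : w \in X by apply: sub_in wa _; rewrite cw.
    have hw' : w' \in X by apply: sub_in w'a _; rewrite cw'.
    have Zw : Z \subset w by apply: subset_trans h2 (subsetIl _ _).
    have Zw' : Z \subset w' by apply: subset_trans h2 (subsetIr _ _).
    have hZ : Z \in X by apply: sub_in (subset_trans Zw wa) _; rewrite h3.
    rewrite !gdef; apply: (Hf _ _ (insubd x Z)).
    + by rewrite covE !insubdK // wa orbT /= pdim_insubd // cw pdx; apply/eqP; ilia.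
    + by rewrite covE !insubdK // w'a orbT /= pdim_insubd // cw' pdx; apply/eqP; ilia.
    + by rewrite covE !insubdK // Zw orbT /= !pdim_insubd // cw pdx h3 /= hm2; apply/eqP; ilia.
    + by rewrite covE !insubdK // Zw' orbT /= !pdim_insubd // cw' pdx h3 /= hm2; apply/eqP; ilia.
    + exact: HZ.
  case: (lerP 0 (pdim d b)) => hb.
  + rewrite -(gE x) -(gE y).
    apply: (johnson (L := val b) (U := val a) (k := #|val x|)) => //.
    * apply: HI.
        rewrite -sdimE ltnS; apply: d_mono_pos => //; rewrite hm2.
        by change (pdim d b <= pdim d a - 2); ilia.
      move=> Z hZ bZ cZ; apply: reach_down; rewrite ?insubdK // pdim_insubd // cZ /= hm2.
      ilia.
    * exact: xb2.
    * exact: yb2.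
  + have [p /andP[px pb]] : exists p, (p \in val x) && (p \in val b).
      by apply: xb4; apply/andP; split; ilia.
    have [q /andP[qy qb]] : exists q, (q \in val y) && (q \in val b).
      by apply: yb4; apply/andP; split; ilia.
    have sx0 : sdim x != 0%N.
      apply/eqP => e; have : pdim d x = 0 by rewrite /pdim e d0.
      ilia.
    have [w0 [h1 h2 h3]] : exists w0 : {set V}, [/\ [set p; q] \subset w0, w0 \subset val a & #|w0| = #|val x|].
      apply: SUB.
        apply/subsetP => t; rewrite !inE => /orP[] /eqP ->.
          exact: (subsetP xa).
        exact: (subsetP ya).
      rewrite cards2 (subset_leq_card xa) andbT hk ltnS; case: (p != q) => //; by rewrite lt0n.
    have pw0 : p \in w0 by apply: (subsetP h1); rewrite !inE eqxx.
    have qw0 : q \in w0 by apply: (subsetP h1); rewrite !inE eqxx orbT.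
    have HZ : forall r, r \in val b -> forall Z : {set V}, Z \in X -> [set r] \subset Z ->
        #|Z| = m2.+1 -> lam_ge d (insubd x Z) b.
      move=> r rb Z hZ rZ cZ; apply: (@reach_cross _ _ r).
      * exact: ltW hb.
      * by rewrite pdim_insubd // cZ /= hm2.
      * by rewrite insubdK // -sub1set.
      * exact: rb.
    transitivity (g w0).
      rewrite -(gE x); apply: (johnson (L := [set p]) (U := val a) (k := #|val x|)) => //.
      * by apply: HI; [rewrite cards1 | exact: HZ].
      * by rewrite sub1set.
      * by rewrite sub1set.
    rewrite -(gE y); apply: (johnson (L := [set q]) (U := val a) (k := #|val x|)) => //.
    * by apply: HI; [rewrite cards1 | exact: HZ].
    * by rewrite sub1set.
    * by rewrite sub1set.
- have hx0 : pdim d x <= 0 by ilia.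
  have xbs : val x \subset val b by apply: xb3.
  have ybs : val y \subset val b by apply: yb3; ilia.
  have m2x : (sdim x <= m2)%N.
    by apply: d_mono_neg; [rewrite hm2; change (pdim d a - 2 <= pdim d x); ilia | change (pdim d x <= 0); ilia].
  have m2x' : m2 != sdim x.
    by apply/eqP => e; move: hm2; rewrite e; change (pdim d x = pdim d a - 2 -> False); ilia.
  have m2b : (m2 <= sdim b)%N.
    by apply: d_mono_neg; rewrite hm2; [change (pdim d b <= pdim d a - 2); ilia | ilia].
  have HII : forall w w' : {set V}, w \subset val b -> w' \subset val b ->
      #|w| = #|val x| -> #|w'| = #|val x| -> (#|w :|: w'| <= m2.+1)%N ->
      (val a \subset w) || (w \subset val a) -> (val a \subset w') || (w' \subset val a) ->
      g w = g w'.
    move=> w w' wb w'b cw cw' cu ia ia'.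
    have [Z [h1 h2 h3]] : exists Z : {set V}, [/\ w :|: w' \subset Z, Z \subset val b & #|Z| = m2.+1].
      by apply: SUB; rewrite ?subUset ?wb ?w'b // cu -sdimE ltnS m2b.
    have hw : w \in X by apply: sub_in wb _; rewrite cw.
    have hw' : w' \in X by apply: sub_in w'b _; rewrite cw'.
    have Zw : w \subset Z by apply: subset_trans (subsetUl _ _) h1.
    have Zw' : w' \subset Z by apply: subset_trans (subsetUr _ _) h1.
    have hZ : Z \in X by apply: sub_in h2 _; rewrite h3.
    rewrite !gdef; apply: (Hf _ _ (insubd x Z)).
    + by rewrite covE !insubdK // ia /= pdim_insubd // cw pdx; apply/eqP; ilia.
    + by rewrite covE !insubdK // ia' /= pdim_insubd // cw' pdx; apply/eqP; ilia.
    + by rewrite covE !insubdK // Zw /= !pdim_insubd // cw pdx h3 /= hm2; apply/eqP; ilia.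
    + by rewrite covE !insubdK // Zw' /= !pdim_insubd // cw' pdx h3 /= hm2; apply/eqP; ilia.
    + apply: reach_up; rewrite ?insubdK // pdim_insubd // h3 /= hm2; ilia.
  case: (lerP (pdim d a) 0) => ha.
  + have ax' : val a \subset val x by apply: cover_up ax ha.
    have ay' : val a \subset val y by apply: cover_up ay ha.
    rewrite -(gE x) -(gE y).
    apply: (johnson (L := val a) (U := val b) (k := #|val x|)) => //.
    move=> w w' aw wb aw' w'b cw cw' ci; apply: HII => //.
      by rewrite cardsU cw cw'; clear -ci m2x m2x' hk; lia.
    by rewrite aw.
    by rewrite aw'.
  + have sx0 : sdim x = 0%N.
      by apply: d_inj; rewrite d0; change (pdim d x = 0); ilia.
    rewrite -(gE x) -(gE y); apply: HII => //.
    * rewrite sx0 in m2x'; rewrite cardsU kxy hk sx0; clear -m2x'; lia.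
    * by case/andP: ax.
    * by case/andP: ay.
Qed.

End Comb.

Section Cat.
Variables (F : fieldType) (V : finType) (X : {set {set V}}) (d : nat -> int).
Hypothesis hX : simplicial_complex X.
Hypothesis hd : cellular_perversity d.

Local Notation simp := (simplex X).
Local Notation robj := (robj F X d).
Local Notation presheaf := (presheaf F X d).

Lemma path_pdim (a : simp) s : path (lcover d) a s ->
  pdim d (last a s) + (size s)%:Z = pdim d a.
Proof.
elim: s a => [|c s IH] a /=; first by rewrite addr0.
case/andP => /cover_pdim e /IH h; rewrite e -h; lia.
Qed.

Lemma path_refl (a : simp) s : path (lcover d) a s -> last a s = a -> s = [::].
Proof. move=> p e; have := path_pdim p; rewrite e; case: s {p e} => //= c s; lia. Qed.

Lemma ex_path (a b : simp) : lam_ge d a b ->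
  exists s, path (lcover d) a s && (last a s == b).
Proof. by case/connectP => s p e; exists s; rewrite p e eqxx. Qed.

Definition pch (a b : simp) : seq simp :=
  match Bool.bool_dec (lam_ge d a b) true with
  | left h => xchoose (ex_path h) | right _ => [::] end.

Lemma pchP (a b : simp) : lam_ge d a b ->
  path (lcover d) a (pch a b) /\ last a (pch a b) = b.
Proof.
rewrite /pch; case: Bool.bool_dec => // h _.
by case/andP: (xchooseP (ex_path h)) => p /eqP e.
Qed.

Definition rm (R : robj) (a b : simp) : 'Hom(r_sp R a, r_sp R b) :=
  match Bool.bool_dec (lcover d a b) true with
  | left h => r_map R h | right _ => 0%R end.

Lemma rmE (R : robj) (a b : simp) (h : lcover d a b) : rm R a b = r_map R h.
Proof.
rewrite /rm; case: Bool.bool_dec => [h'|]; last by rewrite h.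
by rewrite (bool_irrelevance h' h).
Qed.

Definition idc (sp : simp -> vectType F) (a b : simp) : 'Hom(sp a, sp b) :=
  if a =P b is ReflectT e then eq_rect a (fun c => 'Hom(sp a, sp c)) \1%VF b e else 0%R.

Lemma idcE sp (a : simp) : idc sp a a = \1%VF.
Proof. by rewrite /idc; case: eqP => // e; rewrite (eq_irrelevance e erefl). Qed.

Fixpoint pc (R : robj) (a b : simp) (s : seq simp) : 'Hom(r_sp R a, r_sp R b) :=
  match s with
  | [::] => idc (r_sp R) a b
  | c :: s' => (pc R c b s' \o rm R a c)%VF
  end.

Lemma pc_indep (R : robj) n : forall (a b : simp) s t,
  path (lcover d) a s -> path (lcover d) a t -> last a s = b -> last a t = b ->
  size s = n -> pc R a b s = pc R a b t.
Proof.
elim: n => [|n IH] a b s t ps pt ls lt sz.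
  case: s sz ps ls => // _ _ /= e; rewrite -e in lt.
  by rewrite (path_refl pt lt).
case: s sz ps ls => // x s' [sz] /= /andP[ax ps'] ls.
case: t pt lt => [|y t'] /=.
  move=> _ e; move: (@path_pdim a (x :: s') (introT andP (conj ax ps'))) => /=.
  by rewrite ls -e sz; lia.
case/andP=> ay pt' lt.
have hsz : size t' = n.
  have := path_pdim pt'; have := path_pdim ps'; rewrite ls lt sz.
  move: (cover_pdim ax) (cover_pdim ay); lia.
case: n IH sz hsz => [|n] IH sz hsz.
  case: s' ps' ls sz => // _ /= ->; case: t' pt' lt hsz => // _ /= -> _.
  by [].
have xb : lam_ge d x b by apply/connectP; exists s'.
have yb : lam_ge d y b by apply/connectP; exists t'.
have pab : pdim d b + 2 <= pdim d a.
  have := path_pdim ps'; rewrite ls sz (cover_pdim ax); lia.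
pose f := fun z => (pc R z b (pch z b) \o rm R a z)%VF.
have fE : forall z u, path (lcover d) z u -> last z u = b -> size u = n.+1 ->
    (pc R z b u \o rm R a z)%VF = f z.
  move=> z u pu lu su; rewrite /f; congr (_ \o _)%VF.
  have [p1 p2] := @pchP z b (introT connectP (ex_intro2 _ _ u pu (esym lu))).
  exact: IH pu p1 lu p2 su.
rewrite (fE x s') // (fE y t') //.
apply: (@conn V X d hX hd _ f a b pab) => // x1 y1 z h1 h2 h1' h2' zb.
have [pz lz] := pchP zb.
have sz1 : size (pch z b) = n.
  have := path_pdim pz; rewrite lz.
  have := path_pdim ps'; rewrite ls sz.
  move: (cover_pdim ax) (cover_pdim h1) (cover_pdim h1'); lia.
have pz' : path (lcover d) x1 (z :: pch z b) by rewrite /= h1' pz.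
have pz'' : path (lcover d) y1 (z :: pch z b) by rewrite /= h2' pz.
have e1 := fE x1 (z :: pch z b) pz' lz (congr1 S sz1).
have e2 := fE y1 (z :: pch z b) pz'' lz (congr1 S sz1).
rewrite -e1 -e2 /=.
rewrite -!comp_lfunA (@rmE R _ _ h1') (@rmE R _ _ h1) (@rmE R _ _ h2') (@rmE R _ _ h2).
by rewrite (r_comm R h1 h1' h2 h2').
Qed.


Lemma pc_cat (R : robj) (a b c : simp) s t : last a s = b ->
  (pc R b c t \o pc R a b s)%VF = pc R a c (s ++ t).
Proof.
elim: s a => [|x s IH] a /= e.
  by rewrite -e idcE comp_lfun1r.
by rewrite comp_lfunA IH.
Qed.

Definition gmap (R : robj) (a b : simp) (h : lam_ge d a b) : 'Hom(r_sp R a, r_sp R b) :=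
  pc R a b (pch a b).

Lemma gmap_id (R : robj) (a : simp) (h : lam_ge d a a) : gmap R h = \1%VF.
Proof. by rewrite /gmap; have [p l] := pchP h; rewrite (path_refl p l) /= idcE. Qed.

Lemma gmap_comp (R : robj) (a b c : simp) (hab : lam_ge d a b) (hbc : lam_ge d b c)
  (hac : lam_ge d a c) : (gmap R hbc \o gmap R hab)%VF = gmap R hac.
Proof.
have [p1 l1] := pchP hab; have [p2 l2] := pchP hbc; have [p3 l3] := pchP hac.
rewrite /gmap pc_cat //.
apply: (@pc_indep R (size (pch a b ++ pch b c))) => //.
- by rewrite cat_path p1 l1 p2.
- by rewrite last_cat l1 l2.
Qed.

Definition Go (R : robj) : presheaf :=
  @Presheaf F V X d (r_sp R) (fun a b h => gmap R h) (@gmap_id R) (@gmap_comp R).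

Definition fmap (S : presheaf) (a b : simp) (h : lcover d a b) : 'Hom(ps_sp S a, ps_sp S b) :=
  ps_map S (connect1 h).

Lemma fmap_comm (S : presheaf) (a' a1 a2 a'' : simp) (h1 : lcover d a' a1)
  (h1' : lcover d a1 a'') (h2 : lcover d a' a2) (h2' : lcover d a2 a'') :
  (fmap S h1' \o fmap S h1)%VF = (fmap S h2' \o fmap S h2)%VF.
Proof.
rewrite /fmap (ps_comp S _ _ (connect_trans (connect1 h1) (connect1 h1'))).
by rewrite (ps_comp S _ _ (connect_trans (connect1 h1) (connect1 h1'))).
Qed.

Definition Fo (S : presheaf) : robj :=
  @RObj F V X d (ps_sp S) (fun a b h => fmap S h) (@fmap_comm S).

Definition Fm (S T : presheaf) (f : presheaf_hom S T) : robj_hom (Fo S) (Fo T) :=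
  @RHom F V X d (Fo S) (Fo T) (ph_fun f) (fun a b h => ph_nat f (connect1 h)).

Lemma pc_Fo (S : presheaf) (a b : simp) s (h : lam_ge d a b) :
  path (lcover d) a s -> last a s = b -> pc (Fo S) a b s = ps_map S h.
Proof.
elim: s a h => [|x s IH] a h /=.
  by move=> _ e; subst b; rewrite idcE (ps_id S).
case/andP => ax px e.
have xb : lam_ge d x b by apply/connectP; exists s => //; rewrite e.
rewrite (IH x xb px e) (@rmE (Fo S) _ _ ax) /= /fmap.
exact: ps_comp.
Qed.

Lemma ps_eq (sp : simp -> vectType F) (m1 m2 : forall a b : simp, lam_ge d a b -> 'Hom(sp a, sp b)) i1 i2 c1 c2 :
  (forall a b h, m1 a b h = m2 a b h) ->
  @Presheaf F V X d sp m1 i1 c1 = @Presheaf F V X d sp m2 i2 c2.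
Proof.
move=> H.
have e : m1 = m2.
  apply: functional_extensionality_dep => a; apply: functional_extensionality_dep => b.
  apply: functional_extensionality_dep => h; exact: H.
subst m2; by rewrite (proof_irrelevance _ i1 i2) (proof_irrelevance _ c1 c2).
Qed.

Lemma ro_eq (sp : simp -> vectType F) (m1 m2 : forall a b : simp, lcover d a b -> 'Hom(sp a, sp b)) c1 c2 :
  (forall a b h, m1 a b h = m2 a b h) ->
  @RObj F V X d sp m1 c1 = @RObj F V X d sp m2 c2.
Proof.
move=> H.
have e : m1 = m2.
  apply: functional_extensionality_dep => a; apply: functional_extensionality_dep => b.
  apply: functional_extensionality_dep => h; exact: H.
subst m2; by rewrite (proof_irrelevance _ c1 c2).
Qed.

Lemma GoFo (S : presheaf) : Go (Fo S) = S.
Proof.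
case: S => sp m i c; apply: ps_eq => a b h.
have [p l] := pchP h.
by rewrite /gmap (pc_Fo _ h p l).
Qed.

Lemma FoGo (R : robj) : Fo (Go R) = R.
Proof.
case: R => sp m c; apply: ro_eq => a b h.
rewrite /fmap /= /gmap.
have [p l] := pchP (connect1 h).
rewrite (@pc_indep _ (size (pch a b)) a b (pch a b) [:: b]) //=; last by rewrite h.
by rewrite idcE comp_lfun1l (@rmE (RObj c) _ _ h).
Qed.

Lemma pc_nat (R R' : robj) (g : robj_hom R R') (a b : simp) s :
  path (lcover d) a s -> last a s = b ->
  (rh_fun g b \o pc R a b s)%VF = (pc R' a b s \o rh_fun g a)%VF.
Proof.
elim: s a => [|x s IH] a /=.
  by move=> _ e; subst b; rewrite !idcE comp_lfun1l comp_lfun1r.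
case/andP => ax px e.
rewrite comp_lfunA (IH x px e) -!comp_lfunA (@rmE R _ _ ax) (@rmE R' _ _ ax).
by rewrite (rh_nat g ax).
Qed.

Lemma gm_nat (S T : presheaf) (g : robj_hom (Fo S) (Fo T)) (a b : simp) (h : lam_ge d a b) :
  (rh_fun g b \o ps_map S h)%VF = (ps_map T h \o rh_fun g a)%VF.
Proof.
have [p l] := pchP h.
rewrite -(pc_Fo S h p l) -(pc_Fo T h p l).
exact: (@pc_nat (Fo S) (Fo T) g a b _ p l).
Qed.

Definition Gm (S T : presheaf) (g : robj_hom (Fo S) (Fo T)) : presheaf_hom S T :=
  @PresheafHom F V X d S T (rh_fun g) (@gm_nat S T g).

Lemma rh_eq (R R' : robj) (f g : robj_hom R R') : (forall a, rh_fun f a = rh_fun g a) -> f = g.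
Proof.
case: f g => [f1 p1] [g1 q1] /= H.
have e : f1 = g1 by apply: functional_extensionality_dep.
subst g1; by rewrite (proof_irrelevance _ p1 q1).
Qed.

Lemma ph_eq (S T : presheaf) (f g : presheaf_hom S T) : (forall a, ph_fun f a = ph_fun g a) -> f = g.
Proof.
case: f g => [f1 p1] [g1 q1] /= H.
have e : f1 = g1 by apply: functional_extensionality_dep.
subst g1; by rewrite (proof_irrelevance _ p1 q1).
Qed.

End Cat.

Theorem lemma1p2p6 (F : fieldType) (V : finType) (X : {set {set V}})
  (d : nat -> int)
  (hX : simplicial_complex X) (hconn : sc_connected X)
  (hd : cellular_perversity d) :
  Pre_R_isomorphic F X d.
Proof.
exists (@Fo F V X d), (@Fm F V X d); split.
- by move=> S; apply: rh_eq.
- by move=> S T U f g; apply: rh_eq.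
- by exists (@Go F V X d hX hd); [exact: GoFo | exact: FoGo].
- by move=> S T; exists (@Gm F V X d S T) => f; [apply: ph_eq | apply: rh_eq].
Qed.
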